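(* Let $P,Q$ be probability distributions on $\mathbb R^d$, absolutely continuous with respect to Lebesgue measure, with finite second moments and $L$-Lipschitz continuous densities $p,q$. Let $\epsilon>0$ and $\lambda>\epsilon$. If $\mathcal W_2(p,q)<\epsilon^2$, then for every $x\in\mathbb R^d$ $$p_\lambda(x)\le\frac{vol_d(\lambda)}{vol_d(\lambda-\epsilon)}q_\lambda(x)+\Big(\frac{vol_d(\lambda)}{vol_d(\lambda-\epsilon)}-1\Big)2\lambda L+\frac{\epsilon}{vol_d(\lambda-\epsilon)}.$$
   Context: $\mathcal W_2$ is the 2-Wasserstein distance. $B^d_\lambda(x)$ denotes the Euclidean ball in $\mathbb R^d$ of radius $\lambda$ centered at $x$, $vol_d(\lambda)$ its volume, and for a density $p$, $p_\lambda(x)=\frac1{vol_d(\lambda)}\int_{B^d_\lambda(0)}p(x+z)\,dz$ (similarly $q_\lambda$). *)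

(* Defs.v *)
From HB Require Import structures.
From mathcomp Require Import all_boot all_order all_algebra.
From mathcomp Require Import all_classical all_reals all_analysis.
Set Implicit Arguments. Unset Strict Implicit. Unset Printing Implicit Defensive.
Import Order.TTheory GRing.Theory Num.Theory.
Local Open Scope classical_set_scope.
Local Open Scope ring_scope.

(* Points of R^d are d-tuples of reals; [d.-tuple R] carries the product
   (= Borel) sigma-algebra generated by the coordinate projections. *)

Section Defs.
Context {R : realType} {d : nat}.
Local Notation V := (d.-tuple R).

Definition vadd (x y : V) : V := [tuple tnth x i + tnth y i | i < d].
Definition vsub (x y : V) : V := [tuple tnth x i - tnth y i | i < d].
Definition vzero : V := [tuple (0 : R) | i < d].

Definition enorm (x : V) : R := Num.sqrt (\sum_(i < d) tnth x i ^+ 2).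

Definition eball (x : V) (lam : R) : set V := [set y | enorm (vsub y x) < lam].

(* mu is the d-dimensional Lebesgue measure (on Borel sets): it gives every
   closed box its volume; this determines it uniquely. *)
Definition is_lebesgue (mu : {measure set V -> \bar R}) : Prop :=
  forall a b : V, (forall i, tnth a i <= tnth b i) ->
    mu [set x | forall i, tnth a i <= tnth x i <= tnth b i]
    = (\prod_(i < d) (tnth b i - tnth a i))%:E.

Definition vol (mu : {measure set V -> \bar R}) (lam : R) : R :=
  fine (mu (eball vzero lam)).

Definition is_density (mu : {measure set V -> \bar R}) (p : V -> R) : Prop :=
  [/\ measurable_fun setT p, (forall x, 0 <= p x) &
      (\int[mu]_x (p x)%:E = 1)%E].

Definition finite_second_moment (mu : {measure set V -> \bar R}) (p : V -> R)
  : Prop := (\int[mu]_x ((enorm x ^+ 2 * p x)%:E) < +oo)%E.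

Definition lipschitz_with (L : R) (p : V -> R) : Prop :=
  forall x y, `|p x - p y| <= L * enorm (vsub x y).

Definition distr_of (mu : {measure set V -> \bar R}) (p : V -> R) (A : set V)
  : \bar R := (\int[mu]_(x in A) (p x)%:E)%E.

Definition couplings (mu : {measure set V -> \bar R}) (p q : V -> R)
  : set (probability (V * V)%type R) :=
  [set pi | forall A : set V, measurable A ->
     pi (A `*` setT) = distr_of mu p A /\ pi (setT `*` A) = distr_of mu q A].

Definition W2 (mu : {measure set V -> \bar R}) (p q : V -> R) : \bar R :=
  ((ereal_inf [set (\int[pi]_z ((enorm (vsub z.1 z.2)) ^+ 2)%:E)%E
               | pi in couplings mu p q]) `^ (2^-1))%E.

Definition smooth (mu : {measure set V -> \bar R}) (lam : R) (p : V -> R)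
  (x : V) : R :=
  (vol mu lam)^-1 * (\int[mu]_(z in eball vzero lam) p (vadd x z)).

End Defs.

(* Main.v *)
Require Import Defs.
From HB Require Import structures.
From mathcomp Require Import all_boot all_order all_algebra.
From mathcomp Require Import all_classical all_reals all_analysis.
From mathcomp Require Import ring lra.
Import Order.TTheory GRing.Theory Num.Theory.
Local Open Scope classical_set_scope.
Local Open Scope ring_scope.
Section vec.
Context {R : realType} {d : nat}.
Local Notation V := (d.-tuple R).

Lemma tnth_vadd (x y : V) i : tnth (vadd x y) i = tnth x i + tnth y i.
Proof. by rewrite /vadd tnth_mktuple. Qed.
Lemma tnth_vsub (x y : V) i : tnth (vsub x y) i = tnth x i - tnth y i.
Proof. by rewrite /vsub tnth_mktuple. Qed.
Lemma tnth_vzero i : tnth (vzero : V) i = 0.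
Proof. by rewrite /vzero tnth_mktuple. Qed.

Lemma enorm_ge0 (x : V) : 0 <= enorm x.
Proof. exact: sqrtr_ge0. Qed.

Lemma sumsq_ge0 (x : V) : 0 <= \sum_(i < d) tnth x i ^+ 2.
Proof. by apply: sumr_ge0 => i _; exact: sqr_ge0. Qed.

Lemma enorm_sq (x : V) : enorm x ^+ 2 = \sum_(i < d) tnth x i ^+ 2.
Proof. by rewrite /enorm sqr_sqrtr // sumsq_ge0. Qed.

Lemma enorm_le (x : V) (c : R) : 0 <= c ->
  \sum_(i < d) tnth x i ^+ 2 <= c ^+ 2 -> enorm x <= c.
Proof.
move=> c0 h; rewrite /enorm -(@ger0_norm _ c) // -sqrtr_sqr.
by rewrite ler_sqrt // sqr_ge0.
Qed.

Lemma enorm_lt (x : V) (c : R) : 0 <= c ->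
  \sum_(i < d) tnth x i ^+ 2 < c ^+ 2 -> enorm x < c.
Proof.
move=> c0 h; rewrite /enorm -(@ger0_norm _ c) // -sqrtr_sqr.
by rewrite ltr_sqrt // (le_lt_trans (sumsq_ge0 x) h).
Qed.

Lemma tnth_le_enorm (x : V) i : `|tnth x i| <= enorm x.
Proof.
rewrite -(@ger0_norm _ (enorm x)) ?enorm_ge0 // -ler_sqr ?normr_ge0 //.
rewrite !real_normK ?num_real // enorm_sq (bigD1 i) //= lerDl.
by apply: sumr_ge0 => j _; exact: sqr_ge0.
Qed.

Lemma cauchy_schwarz (x y : V) :
  \sum_(i < d) tnth x i * tnth y i <= enorm x * enorm y.
Proof.
set A := enorm x; set B := enorm y.
have A0 : 0 <= A := enorm_ge0 x. have B0 : 0 <= B := enorm_ge0 y.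
have key : 2 * (A * B) * (\sum_(i < d) tnth x i * tnth y i)
    <= 2 * (A * B) * (A * B).
  rewrite mulr_sumr.
  have -> : 2 * (A * B) * (A * B) =
     \sum_(i < d) (tnth x i ^+ 2 * B ^+ 2 + tnth y i ^+ 2 * A ^+ 2).
    rewrite big_split /= -!mulr_suml -!enorm_sq -/A -/B; ring.
  apply: ler_sum => i _.
  have := sqr_ge0 (tnth x i * B - tnth y i * A); nra.
have [AB0|] := eqVneq (A * B) 0.
  have [A0'|B0'] : A = 0 \/ B = 0.
    by move/eqP: AB0; rewrite mulf_eq0 => /orP[/eqP|/eqP]; [left|right].
  - rewrite big1 ?A0' ?mul0r // => i _.
    have := tnth_le_enorm x i; rewrite -/A A0' normr_le0 => /eqP ->.
    by rewrite mul0r.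
  - rewrite big1 ?B0' ?mulr0 // => i _.
    have := tnth_le_enorm y i; rewrite -/B B0' normr_le0 => /eqP ->.
    by rewrite mulr0.
move=> ABn0.
have ABp : 0 < A * B by rewrite lt_def ABn0 mulr_ge0.
by rewrite -(ler_pM2l (_ : 0 < 2 * (A * B))) // mulr_gt0.
Qed.

Lemma enorm_triangle (x y : V) : enorm (vadd x y) <= enorm x + enorm y.
Proof.
apply: enorm_le; first by rewrite addr_ge0 ?enorm_ge0.
have -> : \sum_(i < d) tnth (vadd x y) i ^+ 2 =
  enorm x ^+ 2 + 2 * (\sum_(i < d) tnth x i * tnth y i) + enorm y ^+ 2.
  rewrite !enorm_sq mulr_sumr -!big_split /=; apply: eq_bigr => i _.
  by rewrite tnth_vadd; ring.
have := cauchy_schwarz x y; nra.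
Qed.

Lemma enorm_vsubC (x y : V) : enorm (vsub x y) = enorm (vsub y x).
Proof.
rewrite /enorm; congr Num.sqrt; apply: eq_bigr => i _.
by rewrite !tnth_vsub -sqrrN opprB.
Qed.

Lemma vsub_split (x y z : V) : vsub x z = vadd (vsub x y) (vsub y z).
Proof.
by apply: eq_from_tnth => i; rewrite tnth_vadd !tnth_vsub addrA subrK.
Qed.

Lemma enorm_vsub_tri (x y z : V) :
  enorm (vsub x z) <= enorm (vsub x y) + enorm (vsub y z).
Proof. by rewrite (vsub_split x y z) enorm_triangle. Qed.

Lemma vsub_vadd2 (x z w : V) : vsub (vadd x z) (vadd x w) = vsub z w.
Proof.
by apply: eq_from_tnth => i; rewrite !tnth_vsub !tnth_vadd opprD addrACA subrr add0r.
Qed.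

Lemma vsub0 (z : V) : vsub z vzero = z.
Proof. by apply: eq_from_tnth => i; rewrite tnth_vsub tnth_vzero subr0. Qed.

Lemma vsub_vaddl (x z : V) : vsub (vadd x z) x = z.
Proof. by apply: eq_from_tnth => i; rewrite tnth_vsub tnth_vadd addrAC subrr add0r. Qed.

Lemma eball_vadd (x z : V) r : eball vzero r z <-> eball x r (vadd x z).
Proof. by rewrite /eball /= vsub0 vsub_vaddl. Qed.

End vec.
Section meas.
Context {R : realType} {d : nat}.
Local Notation V := (d.-tuple R).

Lemma mvadd (x : V) : measurable_fun setT (vadd x).
Proof.
apply/measurable_fun_tnthP => i.
rewrite (_ : _ \o _ = fun z : V => tnth x i + tnth z i); last first.
  by apply/funext => z /=; rewrite tnth_vadd.
apply: measurable_realfun.measurable_funD => //; exact: measurable_tnth.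
Qed.

Lemma mvsubc (c : V) : measurable_fun setT (fun y : V => vsub y c).
Proof.
apply/measurable_fun_tnthP => i.
rewrite (_ : _ \o _ = fun z : V => tnth z i - tnth c i); last first.
  by apply/funext => z /=; rewrite tnth_vsub.
apply: measurable_realfun.measurable_funB => //; exact: measurable_tnth.
Qed.

Lemma mvsub2 : measurable_fun setT (fun z : V * V => vsub z.1 z.2).
Proof.
apply/measurable_fun_tnthP => i.
rewrite (_ : _ \o _ = fun z : V * V => tnth z.1 i - tnth z.2 i); last first.
  by apply/funext => z /=; rewrite tnth_vsub.
apply: measurable_realfun.measurable_funB.
- exact: (measurableT_comp (measurable_tnth i) measurable_fst).
- exact: (measurableT_comp (measurable_tnth i) measurable_snd).
Qed.

Lemma msumsq : measurable_fun setT (fun x : V => \sum_(i < d) tnth x i ^+ 2).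
Proof.
apply: measurable_sum => i; apply: measurable_realfun.measurable_funX; exact: measurable_tnth.
Qed.

Lemma menorm : measurable_fun setT (@enorm R d).
Proof.
rewrite (_ : enorm = Num.sqrt \o (fun x : V => \sum_(i < d) tnth x i ^+ 2)) //.
apply: measurableT_comp msumsq.
exact: measurable_realfun.continuous_measurable_fun (@sqrt_continuous R).
Qed.

Lemma mpre (f : V -> R) (Y : set R) : measurable_fun setT f ->
  measurable Y -> measurable (f @^-1` Y).
Proof. by move=> mf mY; rewrite -[X in measurable X]setTI; exact: mf. Qed.

Lemma meball (c : V) r : measurable (eball c r).
Proof.
rewrite (_ : eball c r = (enorm \o (fun y => vsub y c)) @^-1` `]-oo, r[); last first.
  by apply/seteqP; split => y /=; rewrite /eball /= in_itv.
apply: mpre => //; exact: measurableT_comp menorm (mvsubc c).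
Qed.

Definition box (a b : V) : set V := [set x | forall i, tnth a i <= tnth x i <= tnth b i].

Lemma mbox a b : measurable (box a b).
Proof.
rewrite (_ : box a b = \bigcap_(i in [set: 'I_d]) ((fun x : V => tnth x i) @^-1` `[tnth a i, tnth b i])); last first.
  by apply/seteqP; split => y /=; [move=> h i _; rewrite /preimage /= in_itv /= h| move=> h i; have := h i I; rewrite /preimage /= in_itv].
apply: fin_bigcap_measurable => // i _.
apply: mpre => //; exact: measurable_tnth.
Qed.

Lemma mfar (e : R) : measurable [set z : V * V | e <= enorm (vsub z.1 z.2)].
Proof.
rewrite (_ : [set z : V * V | _] = (enorm \o (fun z : V * V => vsub z.1 z.2)) @^-1` `[e, +oo[); last first.
  by apply/seteqP; split => y /=; rewrite /preimage /= in_itv /= andbT.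
rewrite -[X in measurable X]setTI.
by apply: (measurableT_comp menorm mvsub2).
Qed.

Lemma mfsq : measurable_fun setT (fun z : V * V => enorm (vsub z.1 z.2) ^+ 2).
Proof.
apply: measurable_realfun.measurable_funX.
exact: (measurableT_comp menorm mvsub2).
Qed.

End meas.
Section transl.
Context {R : realType} {d : nat}.
Local Notation V := (d.-tuple R).

Definition boxes : set (set V) := [set A | exists a b, A = box a b].
Definition vmax (a a' : V) : V := [tuple Num.max (tnth a i) (tnth a' i) | i < d].
Definition vmin (a a' : V) : V := [tuple Num.min (tnth a i) (tnth a' i) | i < d].
Definition vconst (c : R) : V := [tuple c | i < d].

Lemma boxI a b a' b' : box a b `&` box a' b' = box (vmax a a') (vmin b b').
Proof.
apply/seteqP; split => x /=.
- move=> [h1 h2] i; rewrite !tnth_mktuple ge_max le_min.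
  by case/andP: (h1 i) => -> ->; case/andP: (h2 i) => -> ->.
- move=> h; split => i; have := h i; rewrite !tnth_mktuple ge_max le_min;
  by case/andP => /andP[? ?] /andP[? ?]; apply/andP.
Qed.

Lemma boxes_setI : setI_closed boxes.
Proof. by move=> _ _ [a [b ->]] [a' [b' ->]]; exists (vmax a a'), (vmin b b'); rewrite boxI. Qed.

Lemma exists_nat_gt (c : R) : exists n : nat, c < n%:R.
Proof.
exists (Num.Def.archi_bound `|c|).
exact: le_lt_trans (ler_norm c) (archi_boundP (normr_ge0 c)).
Qed.

Definition cube (n : nat) : set V := box (vconst (- n%:R)) (vconst n%:R).

Lemma cube_cover : \bigcup_k cube k = [set: V].
Proof.
apply/seteqP; split => // y _.
have [n hn] := exists_nat_gt (enorm y).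
exists n => // i; rewrite !tnth_mktuple -ler_norml.
exact: le_trans (tnth_le_enorm y i) (ltW hn).
Qed.

Lemma measurable_boxes : (measurable : set (set V)) = <<s boxes>>.
Proof.
apply/seteqP; split; last first.
  apply: smallest_sub; first exact: sigma_algebra_measurable.
  by move=> _ [a [b ->]]; exact: mbox.
apply: smallest_sub; first exact: smallest_sigma_algebra.
move=> A; rewrite -bigcup_seq => -[i _ /= [B mB <-]].
pose H := image_set_system setT (fun x : V => tnth x i) <<s boxes>>.
change (H B).
have sH : sigma_algebra setT H.
  exact: sigma_algebra_image (smallest_sigma_algebra _ _).
move: B mB; apply: smallest_sub => // _ [[a b] _ <-] /=.
rewrite /H /image_set_system /= setTI.
pose lo (n : nat) : V := [tuple if j == i then a + n.+1%:R^-1 else - n%:R | j < d].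
pose hi (n : nat) : V := [tuple if j == i then b else n%:R | j < d].
have -> : (fun x : V => tnth x i) @^-1` `]a, b] = \bigcup_n box (lo n) (hi n).
  apply/seteqP; split => y /=.
  - rewrite /preimage /= in_itv /= => /andP[ay yb].
    have [n1 hn1] := exists_nat_gt (enorm y).
    have [n2 hn2] := exists_nat_gt ((tnth y i - a)^-1).
    exists (maxn n1 n2) => // j; rewrite !tnth_mktuple.
    case: eqP => [->|_].
    + rewrite yb andbT -lerBrDl.
      have ya : 0 < tnth y i - a by rewrite subr_gt0.
      rewrite -[X in _ <= X]invrK lef_pV2 ?posrE ?invr_gt0 //.
      apply: ltW; apply: lt_le_trans hn2 _.
      by rewrite ler_nat (leq_trans (leq_maxr n1 n2)).
    + rewrite -ler_norml; apply: le_trans (tnth_le_enorm y j) _.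
      by apply: ltW; apply: lt_le_trans hn1 _; rewrite ler_nat leq_maxl.
  - move=> [n _ h]; have := h i; rewrite !tnth_mktuple eqxx => /andP[h1 h2].
    rewrite /preimage /= in_itv /= h2 andbT.
    by apply: lt_le_trans h1; rewrite ltrDl invr_gt0.
case: (smallest_sigma_algebra setT boxes) => _ _; apply => n.
by apply: sub_sigma_algebra; exists (lo n), (hi n).
Qed.


Lemma preimage_box (x a b : V) :
  vadd x @^-1` box a b = box (vsub a x) (vsub b x).
Proof.
apply/seteqP; split => y /= h i; have := h i;
  rewrite !tnth_vsub ?tnth_vadd => /andP[h1 h2]; apply/andP; split.
- by rewrite lerBlDl.
- by rewrite lerBrDl.
- by rewrite -lerBlDl.
- by rewrite -lerBrDl.
Qed.

Lemma box_empty (a b : V) i : tnth b i < tnth a i -> box a b = set0.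
Proof.
move=> ba; apply/seteqP; split => // y /(_ i) /andP[h1 h2].
by have := lt_le_trans (le_lt_trans h2 ba) h1; rewrite ltxx.
Qed.

Lemma mu_box_transl (mu : {measure set V -> \bar R}) (Hmu : is_lebesgue mu) (x a b : V) :
  mu (box a b) = mu (vadd x @^-1` box a b).
Proof.
rewrite preimage_box.
have [hab|] := pselect (forall i, tnth a i <= tnth b i).
  rewrite /box Hmu // Hmu; last by move=> i; rewrite !tnth_vsub lerB.
  congr (_%:E); apply: eq_bigr => i _; rewrite !tnth_vsub; ring.
move=> /existsNP [i /negP]; rewrite -ltNge => ba.
rewrite (box_empty _ _ _ ba) (@box_empty (vsub a x) (vsub b x) i) ?measure0 //.
by rewrite !tnth_vsub ltrD2r.
Qed.

Lemma mu_cube_fin (mu : {measure set V -> \bar R}) (Hmu : is_lebesgue mu) n :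
  (mu (cube n) < +oo)%E.
Proof.
rewrite /cube /box Hmu ?ltry // => i; rewrite !tnth_mktuple.
by rewrite lerNl; apply: le_trans (ler0n _ _); rewrite oppr_le0.
Qed.

Lemma transl_inv (mu : {measure set V -> \bar R}) (Hmu : is_lebesgue mu) (x : V) (A : set V) :
  measurable A -> mu (vadd x @^-1` A) = mu A.
Proof.
move=> mA; apply/esym.
have mx := mvadd x.
apply: (@measure_unique _ _ _ boxes cube measurable_boxes boxes_setI _ cube_cover mu (pushforward mu (vadd x))) => //.
- by move=> n; exists (vconst (- n%:R)), (vconst n%:R).
- by move=> _ [a [b ->]]; exact: mu_box_transl.
- exact: mu_cube_fin.
Qed.

End transl.
Section vol.
Context {R : realType} {d : nat}.
Local Notation V := (d.-tuple R).
Variables (mu : {measure set V -> \bar R}) (Hmu : is_lebesgue mu).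

Lemma eball0_sub_box (r : R) : eball (vzero : V) r `<=` box (vconst (- `|r|)) (vconst `|r|).
Proof.
move=> z; rewrite /eball /= vsub0 => hz i; rewrite !tnth_mktuple -ler_norml.
apply: le_trans (tnth_le_enorm z i) _; apply: le_trans (ltW hz) _.
exact: ler_norm.
Qed.

Lemma mu_eball_fin (r : R) : mu (eball (vzero : V) r) = (vol mu r)%:E.
Proof.
rewrite /vol fineK // ge0_fin_numE ?measure_ge0 //.
have h : (mu (eball (vzero : V) r) <= mu (box (vconst (- `|r|)) (vconst `|r|)))%E.
  by apply: le_measure; rewrite ?inE; [exact: meball|exact: mbox|exact: eball0_sub_box].
apply: le_lt_trans h _.
rewrite /box Hmu ?ltry // => i; rewrite !tnth_mktuple.
by rewrite lerNl; apply: le_trans (normr_ge0 _); rewrite oppr_le0.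
Qed.

Lemma vol_ge0 r : 0 <= vol mu r.
Proof. by rewrite -lee_fin -mu_eball_fin measure_ge0. Qed.

Lemma vol_le r s : r <= s -> vol mu r <= vol mu s.
Proof.
move=> rs; rewrite -lee_fin -!mu_eball_fin.
apply: le_measure; rewrite ?inE; [exact: meball|exact: meball|].
by move=> z; rewrite /eball /=; move/lt_le_trans; apply.
Qed.

Lemma vol_gt0 r : 0 < r -> 0 < vol mu r.
Proof.
move=> r0.
pose c := r / (d.+1)%:R.
have c0 : 0 < c by rewrite divr_gt0.
have cr : c * (d.+1)%:R = r by rewrite /c divfK // pnatr_eq0.
have sub : box (vconst (- c)) (vconst c) `<=` eball (vzero : V) r.
  move=> z hz; rewrite /eball /= vsub0; apply: enorm_lt; first exact: ltW.
  have : \sum_(i < d) tnth z i ^+ 2 <= \sum_(i < d) c ^+ 2.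
    apply: ler_sum => i _; have := hz i; rewrite !tnth_mktuple => /andP[h1 h2].
    nra.
  rewrite sumr_const card_ord => h; apply: le_lt_trans h _.
  rewrite -cr -mulr_natl.
  have hd : (0 : R) <= d%:R by [].
  have : (d%:R : R) < (d.+1)%:R by rewrite ltr_nat.
  nra.
have : (mu (box (vconst (- c)) (vconst c)) <= mu (eball (vzero : V) r))%E.
  by apply: le_measure => //; rewrite inE; [exact: mbox|exact: meball].
rewrite mu_eball_fin /box Hmu; last first.
  by move=> i; rewrite !tnth_mktuple lerNl; apply: le_trans (ltW c0); rewrite oppr_le0 ltW.
rewrite lee_fin; apply: lt_le_trans.
by apply: prodr_gt0 => i _; rewrite !tnth_mktuple opprK addr_gt0.
Qed.

Lemma integral_transl (x : V) (r : R) (f : V -> R) :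
  measurable_fun setT f -> (forall y, 0 <= f y) ->
  (\int[mu]_(z in eball (vzero : V) r) (f (vadd x z))%:E =
   \int[mu]_(y in eball x r) (f y)%:E)%E.
Proof.
move=> mf f0.
have mx := mvadd x.
transitivity (\int[pushforward mu (vadd x)]_(y in eball x r) (f y)%:E)%E; last first.
  apply: eq_measure_integral => A mA _.
  exact: (@transl_inv _ _ mu Hmu x A mA).
rewrite (@ge0_integral_pushforward _ _ _ _ _ (vadd x) mx mu (eball x r) (fun y => (f y)%:E) (meball x r)).
- rewrite (_ : vadd x @^-1` eball x r = eball (vzero : V) r) //.
  by apply/seteqP; split => z /=; rewrite -eball_vadd.
- by apply/measurable_realfun.measurable_EFinP; apply: measurable_funS mf.
- by move=> y _; rewrite lee_fin.
Qed.

End vol.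
Section coupling.
Context {R : realType} {d : nat}.
Local Notation V := (d.-tuple R).
Variables (mu : {measure set V -> \bar R}).

Lemma coupling_step (p q : V -> R) (eps lam : R) (x : V) :
  0 < eps -> (W2 mu p q < (eps ^+ 2)%:E)%E ->
  (distr_of mu p (eball x (lam - eps)) <= distr_of mu q (eball x lam) + eps%:E)%E.
Proof.
move=> e0 HW.
set S := [set (\int[pi]_z ((enorm (vsub z.1 z.2)) ^+ 2)%:E)%E | pi in couplings mu p q].
have I0 : (0 <= ereal_inf S)%E.
  apply/ereal_infP => _ [pi _ <-]; apply: integral_ge0 => z _.
  by rewrite lee_fin sqr_ge0.
have hI : (ereal_inf S < (eps ^+ 4)%:E)%E.
  rewrite ltNge; apply/negP => h.
  have h2 : (((eps ^+ 4)%:E) `^ 2^-1 <= ereal_inf S `^ 2^-1)%E.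
    apply: (gt0_ler_poweR _) => //.
    - by rewrite in_itv /= leey andbT lee_fin exprn_ge0 // ltW.
    - by rewrite in_itv /= leey andbT.
  move: h2; rewrite poweR_EFin powR12_sqrt; last by rewrite exprn_ge0 // ltW.
  rewrite (_ : eps ^+ 4 = (eps ^+ 2) ^+ 2); last by rewrite -exprM.
  rewrite sqrtr_sqr ger0_norm; last by rewrite exprn_ge0 // ltW.
  move=> h3.
  by have := lt_le_trans HW h3; rewrite ltxx.
have [_ [pi hpi <-] hy] := ereal_inf_lt hI.
have mf := (measurable_realfun.measurable_EFinP _ _).2 (@mfsq R d).
set f := (EFin \o _) in mf.
have e20 : 0 < eps ^+ 2 by rewrite exprn_gt0.
have hm := le_integral_abse pi measurableT mf e20.
set far := [set z : V * V | eps <= enorm (vsub z.1 z.2)].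
have farE : setT `&` [set z | (eps ^+ 2)%:E <= `|f z|]%E = far.
  apply/seteqP; split => z /=; rewrite ger0_norm ?sqr_ge0 // lee_fin.
  - move=> [_ h]; have := enorm_ge0 (vsub z.1 z.2); rewrite /far /=; nra.
  - rewrite /far /= => h; split => //; have := enorm_ge0 (vsub z.1 z.2); nra.
rewrite farE in hm.
have intE : (\int[pi]_(z in setT) `|f z| = \int[pi]_z f z)%E.
  by apply: eq_integral => z _; rewrite gee0_abs // lee_fin sqr_ge0.
rewrite intE in hm.
have mfar' : measurable far by exact: mfar.
have pf1 : (pi far <= 1)%E by exact: probability_le1.
have pf0 : (0 <= pi far)%E by exact: measure_ge0.
have pfin : pi far \is a fin_num.
  by rewrite ge0_fin_numE // (le_lt_trans pf1) // ltry.
set t := fine (pi far).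
have pfE : pi far = t%:E by rewrite /t fineK.
have pfe : (pi far <= eps%:E)%E.
  have hm' : eps ^+ 2 * t < eps ^+ 4.
    rewrite -lte_fin EFinM -pfE; exact: (le_lt_trans hm hy).
  rewrite pfE in pf1 pf0 *; rewrite lee_fin in pf1 pf0 *.
  have [e1|e1] := leP 1 eps; first exact: le_trans pf1 e1.
  have : t < eps ^+ 2.
    by rewrite -(ltr_pM2l e20) -exprD.
  move=> h; apply: ltW; apply: lt_trans h _.
  by rewrite expr2 -[X in _ < X](mulr1 eps) ltr_pM2l.
have [mA mB] : measurable (eball x (lam - eps)) /\ measurable (eball x lam).
  by split; exact: meball.
have [hA _] := hpi _ mA.
have [_ hB] := hpi _ mB.
rewrite -hA -hB.
have sub : eball x (lam - eps) `*` setT `<=` (setT `*` eball x lam) `|` far.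
  move=> [u v] /= [Au _].
  have [h|h] := leP eps (enorm (vsub u v)); [by right|left; split => //].
  rewrite /eball /=; apply: le_lt_trans (enorm_vsub_tri v u x) _.
  rewrite enorm_vsubC; move: Au; rewrite /eball /=.
  by move=> Au; rewrite -(subrK eps lam) addrC ltrD.
apply: le_trans (le_measure _ _ _ sub) _; rewrite ?inE.
- by apply: measurableX.
- by apply: measurableU => //; apply: measurableX.
apply: le_trans (measureU2 _ _ _) _.
- by apply: measurableX.
- exact: mfar'.
exact: leeD2l.
Qed.

End coupling.
Section lip.
Context {R : realType} {d : nat}.
Local Notation V := (d.-tuple R).
Variables (mu : {measure set V -> \bar R}) (Hmu : is_lebesgue mu).

Lemma lip_step (p : V -> R) (L eps lam : R) (x : V) :
  measurable_fun setT p -> (forall y, 0 <= p y) -> lipschitz_with L p ->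
  0 < eps -> eps < lam ->
  (forall r, (\int[mu]_(z in eball (vzero : V) r) (p (vadd x z))%:E)%E \is a fin_num) ->
  let a := vol mu (lam - eps) in let b := vol mu lam in
  let F r := fine (\int[mu]_(z in eball (vzero : V) r) (p (vadd x z))%:E)%E in
  F lam <= F (lam - eps) + (b - a) * (F (lam - eps) / a + 2 * lam * L)
  /\ 0 <= (b - a) * L.
Proof.
move=> mp p0 HL e0 el Hfin a b F.
set G := fun z : V => p (vadd x z).
have mG : measurable_fun setT G by apply: measurableT_comp mp (mvadd x).
have mGE := (measurable_realfun.measurable_EFinP _ _).2 mG.
have G0 z : 0 <= G z by exact: p0.
set B1 := eball (vzero : V) (lam - eps).
set B2 := eball (vzero : V) lam.
set Ann := B2 `\` B1.
have mB1 : measurable B1 by exact: meball.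
have mB2 : measurable B2 by exact: meball.
have mAnn : measurable Ann by exact: measurableD.
have a0 : 0 < a by apply: (vol_gt0 mu Hmu) => //; rewrite subr_gt0.
have sB : B1 `<=` B2.
  by move=> z; rewrite /B1 /B2 /eball /= => h; apply: lt_le_trans h _; rewrite lerBlDr lerDl ltW.
have muAnn : mu Ann = (b - a)%:E.
  have h1 := mu_eball_fin mu Hmu lam; have h2 := mu_eball_fin mu Hmu (lam - eps).
  rewrite /Ann measureD //; last by apply: le_lt_trans (ltry (vol mu lam)); rewrite le_eqVlt; apply/orP; left; apply/eqP; exact: h1.
  rewrite setIidr // /b /a EFinB -h1 -h2; reflexivity.
have Lpos z : Ann z -> 0 <= L.
  move=> [h2 h1].
  have hz : lam - eps <= enorm z.
    by rewrite leNgt; apply/negP => h; apply: h1; rewrite /B1 /eball /= vsub0.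
  have := HL (vadd x z) (vadd x vzero); rewrite vsub_vadd2 vsub0 => h.
  have hz0 : 0 < enorm z by apply: lt_le_trans hz; rewrite subr_gt0.
  have := le_trans (normr_ge0 _) h; rewrite pmulr_lge0 //.
have F1E : (\int[mu]_(z in B1) (G z)%:E)%E = (F (lam - eps))%:E by rewrite fineK.
have F2E : (\int[mu]_(z in B2) (G z)%:E)%E = (F lam)%:E by rewrite fineK.
set K := F (lam - eps) / a + 2 * lam * L.
have ptw z : Ann z -> G z <= K.
  move=> hz; have L0 := Lpos z hz; move: hz => [h2 h1].
  have hw : forall w, B1 w -> G z <= G w + 2 * lam * L.
    move=> w hw.
    have := HL (vadd x z) (vadd x w); rewrite vsub_vadd2 => h.
    have hzw : enorm (vsub z w) <= 2 * lam.
      apply: le_trans (enorm_vsub_tri z vzero w) _.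
      rewrite (enorm_vsubC vzero w) !vsub0.
      move: h2 hw; rewrite /B1 /B2 /eball /= !vsub0 => h2 hw.
      lra.
    have := ler_wpM2l L0 hzw.
    move: h; rewrite ler_norml => /andP[_ h] h'.
    rewrite /G; lra.
  have hint : (\int[mu]_(w in B1) (cst (G z)%:E) w <=
               \int[mu]_(w in B1) ((G w)%:E + (2 * lam * L)%:E))%E.
    apply: ge0_le_integral => //.
    - by move=> w _; rewrite lee_fin.
    - apply: emeasurable_funD; last exact: measurable_cst.
      exact: measurable_funS mGE.
  move: hint; rewrite integral_cst // ge0_integralD //; first last.
  - by move=> w _; rewrite lee_fin; apply: mulr_ge0 => //; rewrite mulr_ge0 // ltW // (lt_trans e0).
  - exact: measurable_funS mGE.
  - by move=> w _; rewrite lee_fin.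
  rewrite integral_cst // F1E /B1 (mu_eball_fin mu Hmu) -/a -EFinM -EFinM -EFinD lee_fin => h.
  by rewrite /K -(ler_pM2r a0) mulrDl divfK ?gt_eqF.
have hAnn : (\int[mu]_(z in Ann) (G z)%:E <= (K * (b - a))%:E)%E.
  rewrite EFinM -muAnn -integral_cst //.
  apply: ge0_le_integral => //.
  - by move=> w _; rewrite lee_fin.
  - exact: measurable_funS mGE.
have hsplit : (\int[mu]_(z in B2) (G z)%:E =
   \int[mu]_(z in B1) (G z)%:E + \int[mu]_(z in Ann) (G z)%:E)%E.
  rewrite -ge0_integral_setU //.
  - by rewrite /Ann setDUK.
  - exact: measurable_funS mGE.
  - by move=> w _; rewrite lee_fin.
  - by rewrite /disj_set; apply/eqP/seteqP; split => // w /= [h1 [_ h2]].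
split.
  have := leeD2l (F (lam - eps))%:E hAnn.
  rewrite -[X in (X + _ <= _)%E]F1E -hsplit F2E -EFinD lee_fin => h.
  by apply: le_trans h _; rewrite mulrC.
have [->|] := eqVneq (b - a) 0; first by rewrite mul0r.
move=> ba.
have : (0 < mu Ann)%E.
  rewrite muAnn lte_fin lt_def ba /= subr_ge0.
  by apply: (vol_le mu Hmu); rewrite lerBlDr lerDl ltW.
have [[z hz]|Ann0] := pselect (exists z, Ann z).
  by move=> _; apply: mulr_ge0; [rewrite subr_ge0; apply: (vol_le mu Hmu); rewrite lerBlDr lerDl ltW|exact: Lpos hz].
have -> : Ann = set0 by apply/seteqP; split => // z hz; apply: Ann0; exists z.
by rewrite measure0 ltxx.
Qed.

End lip.

Lemma distr_fin {R : realType} {d : nat} (mu : {measure set (d.-tuple R) -> \bar R})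
  (f : d.-tuple R -> R) (A : set (d.-tuple R)) :
  is_density mu f -> measurable A -> distr_of mu f A \is a fin_num.
Proof.
move=> [mf f0 f1] mA.
have mfE := (measurable_realfun.measurable_EFinP _ _).2 mf.
rewrite ge0_fin_numE; last by apply: integral_ge0 => y _; rewrite lee_fin.
apply: le_lt_trans (ltry 1).
rewrite -f1 /distr_of.
apply: ge0_subset_integral => //.
by move=> y _; rewrite lee_fin.
Qed.

Theorem theorem2 (R : realType) (d : nat)
  (mu : {measure set (d.-tuple R) -> \bar R}) (Hmu : is_lebesgue mu)
  (p q : d.-tuple R -> R) (L eps lam : R)
  (Hp : is_density mu p) (Hq : is_density mu q)
  (Hp2 : finite_second_moment mu p) (Hq2 : finite_second_moment mu q)
  (HLp : lipschitz_with L p) (HLq : lipschitz_with L q)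
  (Heps : 0 < eps) (Hlam : eps < lam)
  (HW : (W2 mu p q < (eps ^+ 2)%:E)%E) :
  forall x : d.-tuple R,
    smooth mu lam p x <=
      vol mu lam / vol mu (lam - eps) * smooth mu lam q x
      + (vol mu lam / vol mu (lam - eps) - 1) * (2 * lam * L)
      + eps / vol mu (lam - eps).
Proof.
move=> x.
have Hp' := Hp; have Hq' := Hq.
move: Hp' Hq' => [mp p0 _] [mq q0 _].
have tr (f : d.-tuple R -> R) : measurable_fun setT f -> (forall y, 0 <= f y) -> forall r,
    (\int[mu]_(z in eball (vzero : d.-tuple R) r) (f (vadd x z))%:E)%E
    = distr_of mu f (eball x r).
  by move=> mf f0 r; apply: (integral_transl mu Hmu).
have Hfinp r : (\int[mu]_(z in eball (vzero : d.-tuple R) r) (p (vadd x z))%:E)%E \is a fin_num.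
  by rewrite tr //; apply: distr_fin => //; exact: meball.
have Hfinq r : (\int[mu]_(z in eball (vzero : d.-tuple R) r) (q (vadd x z))%:E)%E \is a fin_num.
  by rewrite tr //; apply: distr_fin => //; exact: meball.
have [hl hL] := lip_step mu Hmu p L eps lam x mp p0 HLp Heps Hlam Hfinp.
have hc := coupling_step mu p q eps lam x Heps HW.
rewrite -!tr // in hc.
rewrite -(fineK (Hfinp _)) -(fineK (Hfinq _)) -EFinD lee_fin in hc.
rewrite /smooth /Rintegral.
move: hl hL hc.
set a := vol mu (lam - eps); set b := vol mu lam.
set u := fine (\int[mu]_(z in eball vzero lam) (p (vadd x z))%:E)%E.
set v := fine (\int[mu]_(z in eball vzero (lam - eps)) (p (vadd x z))%:E)%E.
set w := fine (\int[mu]_(z in eball vzero lam) (q (vadd x z))%:E)%E.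
move=> hl hL hc.
have a0 : 0 < a by apply: (vol_gt0 mu Hmu); rewrite subr_gt0.
have ab : a <= b by apply: (vol_le mu Hmu); rewrite lerBlDr lerDl ltW.
have b0 : 0 < b by apply: lt_le_trans ab.
have lam0 : 0 < lam by apply: lt_trans Hlam.
have e1 : b^-1 * u <= v / a + b^-1 * ((b - a) * L) * (2 * lam).
  have E : b^-1 * (v + (b - a) * (v / a + 2 * lam * L)) = v / a + b^-1 * ((b - a) * L) * (2 * lam).
    by field; rewrite ?gt_eqF.
  by rewrite -E ler_pM2l ?invr_gt0.
have e2 : b^-1 * ((b - a) * L) * (2 * lam) <= a^-1 * ((b - a) * L) * (2 * lam).
  rewrite ler_pM2r ?mulr_gt0 //; apply: ler_wpM2r => //.
  by rewrite lef_pV2 ?posrE.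
have e3 : v / a <= (w + eps) / a by rewrite ler_pM2r ?invr_gt0.
have -> : b / a * (b^-1 * w) + (b / a - 1) * (2 * lam * L) + eps / a
        = (w + eps) / a + a^-1 * ((b - a) * L) * (2 * lam).
  by field; rewrite ?gt_eqF.
apply: le_trans e1 _; exact: lerD.
Qed.
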